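(* Let $m,n\in\mathbb{N}$. Then: (1) the complete bipartite graph $K_{1,n}$ is an $\mathcal{N}$ position for Grim; (2) if $m,n>1$, then $K_{m,n}$ is an $\mathcal{N}$ position for Grim if and only if $m+n$ is odd.
   Context: Grim is a two-player game on a finite simple undirected graph. Any isolated vertices of the starting graph are deleted before play begins. Players alternate moves; a move consists of selecting a vertex of the current graph and deleting it together with all its incident edges, after which every vertex that has become isolated is also deleted. The player who makes the last legal move wins (a player facing the empty graph has no move and loses). A graph is an $\mathcal{N}$ position if the player about to move has a winning strategy, and a $\mathcal{P}$ position otherwise. *)

(* Defs.v *)
From mathcomp Require Import all_boot.
Set Implicit Arguments. Unset Strict Implicit. Unset Printing Implicit Defensive.

(* A finite simple graph is a symmetric irreflexive relation [e] on a finType [T].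
   A game position is the induced subgraph on a vertex set [S : {set T}]
   (positions reached in play never contain isolated vertices). *)

Definition nonisolated (T : finType) (e : rel T) (S : {set T}) : {set T} :=
  [set x in S | [exists y in S, e x y]].

Definition grim_move (T : finType) (e : rel T) (S : {set T}) (v : T) : {set T} :=
  nonisolated e (S :\ v).

(* N-positions (player to move wins) and P-positions (player to move loses),
   normal play: a player with no legal move loses. *)
Inductive grimN (T : finType) (e : rel T) : {set T} -> Prop :=
| grimN_intro (S : {set T}) (v : T) :
    v \in S -> grimP e (grim_move e S v) -> grimN e S
with grimP (T : finType) (e : rel T) : {set T} -> Prop :=
| grimP_intro (S : {set T}) :
    (forall v : T, v \in S -> grimN e (grim_move e S v)) -> grimP e S.

Definition grim_N_position (T : finType) (e : rel T) : Prop :=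
  grimN e (nonisolated e [set: T]).

Definition Kbip (m n : nat) : rel ('I_m + 'I_n)%type :=
  fun x y => match x, y with
             | inl _, inr _ => true
             | inr _, inl _ => true
             | _, _ => false
             end.
Arguments Kbip m n : clear implicits.

(* Main.v *)
Require Import Defs.
From mathcomp Require Import all_boot.
Set Implicit Arguments. Unset Strict Implicit. Unset Printing Implicit Defensive.

Definition W a b := (a == 1) || (b == 1) || odd (a + b).
Lemma W_l a b : 2 < a -> 1 < b -> odd (a+b) -> ~~ W a.-1 b.
Proof. case: a => [|[|[|a]]] // _; case: b => [|[|b]] // _ /=; rewrite /W !addnS !addSn /= !negbK. Qed.
Lemma W_r a b : 1 < a -> 2 < b -> odd (a+b) -> ~~ W a b.-1.
Proof. case: a => [|[|a]] // _; case: b => [|[|[|b]]] // _ /=; rewrite /W !addnS !addSn /=; by []. Qed.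
Lemma W_dl a b : 1 < a -> ~~ odd (a+b) -> W a.-1 b.
Proof. case: a => [|[|a]] // _ H; rewrite /W ?addSn /= ?negbK in H *; by rewrite ?H ?orbT. Qed.
Lemma W_dr a b : 1 < b -> ~~ odd (a+b) -> W a b.-1.
Proof. case: b => [|[|b]] // _ H; rewrite /W ?addnS /= ?negbK in H *; by rewrite ?H ?orbT. Qed.
Lemma k_l a b k : a + b = k.+1 -> 0 < a -> a.-1 + b = k.
Proof. by case: a => // a; rewrite addSn => -[]. Qed.
Lemma k_r a b k : a + b = k.+1 -> 0 < b -> a + b.-1 = k.
Proof. by case: b => // b; rewrite addnS => -[]. Qed.

Section K.
Variables m n : nat.
Let T := ('I_m + 'I_n)%type.
Let e := Kbip m n.
Definition isl (x : T) : bool := if x is inl _ then true else false.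
Definition Lset : {set T} := [set x | isl x].
Definition ca (S : {set T}) := #|S :&: Lset|.
Definition cb (S : {set T}) := #|S :\: Lset|.

Lemma ex_a (S : {set T}) : 0 < ca S -> exists v, v \in S /\ isl v.
Proof.
rewrite /ca card_gt0 => /set0Pn [v]; rewrite !inE => /andP[? ?]; by exists v.
Qed.
Lemma ex_b (S : {set T}) : 0 < cb S -> exists v, v \in S /\ ~~ isl v.
Proof.
rewrite /cb card_gt0 => /set0Pn [v]; rewrite !inE => /andP[? ?]; by exists v.
Qed.
Lemma a_gt0 (S : {set T}) v : v \in S -> isl v -> 0 < ca S.
Proof. move=> vS vl; rewrite /ca card_gt0; apply/set0Pn; exists v; by rewrite !inE vS vl. Qed.
Lemma b_gt0 (S : {set T}) v : v \in S -> ~~ isl v -> 0 < cb S.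
Proof. move=> vS vl; rewrite /cb card_gt0; apply/set0Pn; exists v; by rewrite !inE vS vl. Qed.

Lemma in_ni (S : {set T}) x : (x \in nonisolated e S) = (x \in S) && (if isl x then 0 < cb S else 0 < ca S).
Proof.
rewrite /nonisolated inE; case: (boolP (x \in S)) => xS //=.
apply/existsP/idP.
- case=> y /andP[yS]; case: x xS => [i|j] xS; case: y yS => [i'|j'] yS //= _.
  + exact: (b_gt0 yS).
  + exact: (a_gt0 yS).
- case: x xS => [i|j] xS /=.
  + case/ex_b => [[i'|j'] [yS Hy]] //; exists (inr j'); by rewrite yS.
  + case/ex_a => [[i'|j'] [yS Hy]] //; exists (inl i'); by rewrite yS.
Qed.

Lemma ni_char (S : {set T}) : nonisolated e S = if (0 < ca S) && (0 < cb S) then S else set0.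
Proof.
apply/setP => x; rewrite in_ni.
case: (boolP (x \in S)) => xS /=; last by case: ifP => _; rewrite ?inE ?(negbTE xS).
case: (boolP (isl x)) => xl; case: (boolP ((0 < ca S) && (0 < cb S))) => H.
- by case/andP: H => _ ->.
- by rewrite inE; move: H; rewrite (a_gt0 xS xl) /= => /negbTE.
- by case/andP: H => -> _.
- by rewrite inE; move: H; rewrite (b_gt0 xS xl) andbT => /negbTE.
Qed.

Lemma rem_l (S : {set T}) v : v \in S -> isl v -> ca (S :\ v) = (ca S).-1 /\ cb (S :\ v) = cb S.
Proof.
move=> vS vl; split.
- rewrite /ca (cardsD1 v (S :&: Lset)) !inE vS vl /= add0n.
  apply: (@eq_card T) => x; rewrite !inE; by rewrite andbA.
- rewrite /cb; apply: (@eq_card T) => x; rewrite !inE.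
  case: (eqVneq x v) => [->|]; by rewrite ?vl.
Qed.

Lemma rem_r (S : {set T}) v : v \in S -> ~~ isl v -> ca (S :\ v) = ca S /\ cb (S :\ v) = (cb S).-1.
Proof.
move=> vS vl; split.
- rewrite /ca; apply: (@eq_card T) => x; rewrite !inE.
  case: (eqVneq x v) => [->|]; by rewrite ?(negbTE vl) ?andbF.
- rewrite /cb (cardsD1 v (S :\: Lset)) !inE vS vl /= add0n.
  apply: (@eq_card T) => x; rewrite !inE; by rewrite andbCA.
Qed.

Lemma P0 : grimP e set0.
Proof. constructor => v; by rewrite inE. Qed.

Lemma main k : forall S : {set T}, ca S + cb S = k -> 0 < ca S -> 0 < cb S ->
  (W (ca S) (cb S) -> grimN e S) /\ (~~ W (ca S) (cb S) -> grimP e S).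
Proof.
elim: k => [|k IH] S.
  by move=> /eqP; rewrite addn_eq0 => /andP[/eqP -> _].
move=> Hk Ha Hb; split.
- rewrite /W; case: (eqVneq (ca S) 1) => [a1 _|a1].
    case: (ex_a Ha) => v [vS vl]; apply: (grimN_intro vS).
    rewrite /grim_move ni_char; case: (rem_l vS vl) => -> _; rewrite a1 /=; exact: P0.
  case: (eqVneq (cb S) 1) => [b1 _|b1 /= Hodd].
    case: (ex_b Hb) => v [vS vl]; apply: (grimN_intro vS).
    rewrite /grim_move ni_char; case: (rem_r vS vl) => _ ->; rewrite b1 /= andbF; exact: P0.
  have a2 : 1 < ca S by rewrite ltn_neqAle eq_sym a1 Ha.
  have b2 : 1 < cb S by rewrite ltn_neqAle eq_sym b1 Hb.
  have [a3|a3] := leqP 3 (ca S).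
    case: (ex_a Ha) => v [vS vl]; apply: (grimN_intro vS).
    rewrite /grim_move ni_char; case: (rem_l vS vl) => Ea Eb.
    have Ha' : 0 < ca (S :\ v) by rewrite Ea -subn1 subn_gt0 ltnW.
    have Hb' : 0 < cb (S :\ v) by rewrite Eb.
    rewrite Ha' Hb' /=.
    apply: (proj2 (IH _ _ Ha' Hb')); rewrite Ea Eb; first exact: k_l.
    exact: W_l.
  have b3 : 2 < cb S.
    have aeq : ca S = 2 by apply/eqP; rewrite eqn_leq a2 andbT.
    move: Hodd; rewrite aeq; case: (cb S) b2 => // [[|[|c]]] //.
  case: (ex_b Hb) => v [vS vl]; apply: (grimN_intro vS).
  rewrite /grim_move ni_char; case: (rem_r vS vl) => Ea Eb.
  have Ha' : 0 < ca (S :\ v) by rewrite Ea.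
  have Hb' : 0 < cb (S :\ v) by rewrite Eb -subn1 subn_gt0 ltnW.
  rewrite Ha' Hb' /=.
  apply: (proj2 (IH _ _ Ha' Hb')); rewrite Ea Eb; first exact: k_r.
  exact: W_r.
- rewrite /W negb_or negb_or => /andP[/andP[a1 b1] Hev].
  have a2 : 1 < ca S by rewrite ltn_neqAle eq_sym a1 Ha.
  have b2 : 1 < cb S by rewrite ltn_neqAle eq_sym b1 Hb.
  constructor => v vS; rewrite /grim_move ni_char.
  case: (boolP (isl v)) => vl.
  + case: (rem_l vS vl) => Ea Eb.
    have Ha' : 0 < ca (S :\ v) by rewrite Ea -subn1 subn_gt0.
    have Hb' : 0 < cb (S :\ v) by rewrite Eb.
    rewrite Ha' Hb' /=.
    apply: (proj1 (IH _ _ Ha' Hb')); rewrite Ea Eb; first exact: k_l.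
    exact: W_dl.
  + case: (rem_r vS vl) => Ea Eb.
    have Ha' : 0 < ca (S :\ v) by rewrite Ea.
    have Hb' : 0 < cb (S :\ v) by rewrite Eb -subn1 subn_gt0.
    rewrite Ha' Hb' /=.
    apply: (proj1 (IH _ _ Ha' Hb')); rewrite Ea Eb; first exact: k_r.
    exact: W_dr.
Qed.
End K.

Lemma NP_excl (T : finType) (e : rel T) k : forall S : {set T}, #|S| <= k ->
  grimN e S -> grimP e S -> False.
Proof.
elim: k => [|k IH] S HS HN HP; destruct HN as [S v vS HPm].
  by move: HS; rewrite leqn0 cards_eq0 => /eqP Se; rewrite Se inE in vS.
destruct HP as [S Hall]; apply: (IH _ _ (Hall v vS) HPm).
have h1 : #|grim_move e S v| <= #|S :\ v|.
  apply: subset_leq_card; apply/subsetP => x; rewrite /grim_move /nonisolated inE.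
  by case/andP.
move: HS; rewrite (cardsD1 v S) vS add1n ltnS => HS.
exact: leq_trans h1 HS.
Qed.

Lemma Lset_card m n : #|Lset m n| = m.
Proof.
have -> : Lset m n = [set inl x | x : 'I_m].
  apply/setP => -[i|j]; rewrite !inE /=.
  - by apply/esym/imsetP; exists i.
  - by apply/esym/imsetP => -[x _].
rewrite card_imset ?card_ord //; by move=> x y [] ->.
Qed.

Lemma Rset_card m n : #|[set: ('I_m + 'I_n)%type] :\: Lset m n| = n.
Proof.
have -> : [set: ('I_m + 'I_n)%type] :\: Lset m n = [set inr x | x : 'I_n].
  apply/setP => -[i|j]; rewrite !inE /=.
  - by apply/esym/imsetP => -[x _].
  - by apply/esym/imsetP; exists j.
rewrite card_imset ?card_ord //; by move=> x y [] ->.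
Qed.

Lemma Kbip_val m n : 0 < m -> 0 < n ->
  (W m n -> grim_N_position (Kbip m n)) /\ (~~ W m n -> grimP (Kbip m n) (nonisolated (Kbip m n) [set: ('I_m + 'I_n)%type])).
Proof.
move=> Hm Hn.
have Ea : ca [set: ('I_m + 'I_n)%type] = m by rewrite /ca setTI Lset_card.
have Eb : cb [set: ('I_m + 'I_n)%type] = n by rewrite /cb Rset_card.
rewrite /grim_N_position ni_char Ea Eb Hm Hn /=.
have := @main m n (m + n) [set: _]; rewrite Ea Eb; by apply.
Qed.

Theorem theorem3p2 :
  (forall n : nat, 0 < n -> grim_N_position (Kbip 1 n)) /\
  (forall m n : nat, 1 < m -> 1 < n ->
     (grim_N_position (Kbip m n) <-> odd (m + n))).
Proof.
split.
- move=> n Hn; apply: (proj1 (@Kbip_val 1 n isT Hn)); by rewrite /W eqxx.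
- move=> m n Hm Hn.
  have Hm0 : 0 < m by apply: ltnW.
  have Hn0 : 0 < n by apply: ltnW.
  have HW : W m n = odd (m + n).
    by rewrite /W (gtn_eqF Hm) (gtn_eqF Hn).
  case: (Kbip_val Hm0 Hn0) => H1 H2; split.
  + move=> HN; apply/negPn/negP; rewrite -HW => /H2 HP.
    exact: (@NP_excl _ _ _ _ (leqnn _) HN HP).
  + by rewrite -HW => /H1.
Qed.
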